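(* Let $\{\lambda_j\}_{j\in\mathbb N}$ be a non-increasing sequence of non-negative reals with $\lambda_1=1$ and $\lim_{j\to\infty}\lambda_j=0$. Then the following are equivalent: (a) $\displaystyle\lim_{\varepsilon\to0}\frac{\ln\ln j(\varepsilon)}{\ln\ln\varepsilon^{-1}}=0$; (b) $\displaystyle\lim_{j\to\infty}\frac{\ln(\ln\frac1{\lambda_j})}{\ln(\ln j)}=\infty$; (c) for every $\delta>0$, $\displaystyle\lim_{\varepsilon\to0}\frac{\ln j(\varepsilon)}{(\ln\varepsilon^{-1})^{\delta}}=0$.
   Context: For $\varepsilon\in(0,1)$, $j(\varepsilon)=\max\{j\in\mathbb N:\lambda_j>\varepsilon^2\}$. If $\lambda_j=0$, $\ln\frac1{\lambda_j}$ is interpreted as $\infty$. *)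

(* Defs.v *)
From HB Require Import structures.
From mathcomp Require Import all_boot all_order all_algebra.
From mathcomp Require Import all_classical all_reals all_analysis.
Set Implicit Arguments. Unset Strict Implicit. Unset Printing Implicit Defensive.
Import Order.TTheory GRing.Theory Num.Theory.
Local Open Scope classical_set_scope.
Local Open Scope ring_scope.

(* The sequence lambda is indexed by nat, with lambda_j meaningful for j >= 1
   (the value at index 0 is irrelevant).
   jeps lam eps = max { j >= 1 : lam j > eps^2 } (chosen classically; the
   maximum exists under the standing hypotheses when 0 < eps < 1). *)
Definition jeps {R : realType} (lam : nat -> R) (eps : R) : nat :=
  xget 0%N [set n : nat | (1 <= n)%N /\ eps ^+ 2 < lam n /\
                          (forall m : nat, (1 <= m)%N -> eps ^+ 2 < lam m -> (m <= n)%N)].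

(* ln (ln (1/lam_j)) / ln (ln j) as an extended real, with the convention
   ln (1/0) = +oo, so the ratio is +oo when lam_j = 0. *)
Definition ratio_b {R : realType} (lam : nat -> R) (j : nat) : \bar R :=
  if lam j == 0 then +oo%E
  else (ln (ln (lam j)^-1) / ln (ln (j%:R)))%:E.

(* Main.v *)
Require Import Defs.
From HB Require Import structures.
From mathcomp Require Import all_boot all_order all_algebra.
From mathcomp Require Import all_classical all_reals all_analysis.
From mathcomp Require Import lra.
Import Order.TTheory GRing.Theory Num.Theory.
Local Open Scope classical_set_scope.
Local Open Scope ring_scope.

Section Aux.
Variable R : realType.

Lemma ex_right (P : R -> Prop) : (\forall x \near 0^'+, P x) ->
  exists2 e : R, 0 < e & forall x, 0 < x -> x < e -> P x.
Proof.
move=> /nbhs_right0P. rewrite near_withinE near_simpl. move/nbhs_normP => [e /= e0 He].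
exists e => // x x0 xe; have := He x; rewrite add0r; apply => //.
by rewrite /ball_ /= sub0r normrN gtr0_norm.
Qed.

Lemma Eps (K : R) : \forall e \near (0:R)^'+,
  [/\ 0 < e, e < 1, 1 < ln e^-1 & K < ln (ln e^-1)].
Proof.
set a := expR (`|K| + 1).
set t := expR (- a).
have t0 : 0 < t by exact: expR_gt0.
near=> e.
have e0 : 0 < e by near: e; exact: nbhs_right_gt.
have et : e < t by near: e; exact: nbhs_right_lt.
have t1 : t < 1 by rewrite /t -expR0 ltr_expR oppr_lt0 expR_gt0.
have ti : t^-1 = expR a by rewrite /t expRN invrK.
have H0 : t^-1 < e^-1 by rewrite ltf_pV2 ?posrE.
have H1 : a < ln e^-1.
  by rewrite -(expRK a) ltr_ln ?posrE ?expR_gt0 ?invr_gt0 // -ti.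
have a1 : `|K| + 1 + 1 <= a by rewrite /a addrC expR_ge1Dx.
have Kn := ler_norm K.
have nK := normr_ge0 K.
have L1 : 1 < ln e^-1 by lra.
split => //.
have H2 : ln a < ln (ln e^-1) by rewrite ltr_ln ?posrE ?expR_gt0 //; lra.
rewrite /a expRK in H2; lra.
Unshelve. all: by end_near.
Qed.

Lemma ln_nat_ge0 (n : nat) : 0 <= ln (n%:R : R).
Proof. by case: n => [|n]; [rewrite ln0 | apply: ln_ge0; rewrite ler1n]. Qed.

Lemma lnln_mono (m n : nat) : (m <= n)%N -> 0 <= ln (ln (n%:R : R)) ->
  ln (ln (m%:R : R)) <= ln (ln (n%:R : R)).
Proof.
move=> mn H.
have [lm0|lm0] := leP (ln (m%:R : R)) 0; first by rewrite (ln0 lm0).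
have m0 : (0 < m)%N.
  by case: m mn lm0 => // _; rewrite ln0 // ltxx.
have ln_le : ln (m%:R : R) <= ln (n%:R : R).
  by rewrite ler_ln ?posrE ?ltr0n ?ler_nat // (leq_trans m0 mn).
by rewrite ler_ln ?posrE // (lt_le_trans lm0 ln_le).
Qed.

Lemma lnln_lb (n : nat) : Num.min 0 (ln (ln (2 : R))) <= ln (ln (n%:R : R)).
Proof.
have [ln0'|lnp] := leP (ln (n%:R : R)) 0; first by rewrite (ln0 ln0') ge_min lexx.
have n2 : (2 <= n)%N.
  case: n lnp => [|[|n]] //.
    by rewrite ln0 // ltxx.
  by rewrite ln1 ltxx.
have l2 : 0 < ln (2 : R) by apply: ln_gt0; rewrite ltr1n.
rewrite ge_min; apply/orP; right.
rewrite ler_ln ?posrE // ler_ln ?posrE ?ltr0n ?ler_nat //; exact: ltnW.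
Qed.

Definition N0 := (Num.Def.trunc (expR (1:R))).+1.

Lemma N0P (n : nat) : (N0 <= n)%N -> 0 < ln (ln (n%:R : R)).
Proof.
move=> Nn; apply: ln_gt0.
have H : expR 1 < (n%:R : R).
  by apply: (lt_le_trans (truncnS_gt _)); rewrite ler_nat.
rewrite -[X in X < _](expRK 1) ltr_ln ?posrE ?expR_gt0 //.
have := expR_gt0 (1:R); lra.
Qed.

Variable lam : nat -> R.
Hypothesis lam1 : lam 1%N = 1.
Hypothesis lam_ge0 : forall j : nat, (1 <= j)%N -> 0 <= lam j.
Hypothesis lam_cvg0 : lam @ \oo --> 0.

Lemma jepsP (e : R) : 0 < e -> e < 1 ->
  [/\ (1 <= jeps lam e)%N, e ^+ 2 < lam (jeps lam e) &
      forall m, (1 <= m)%N -> e ^+ 2 < lam m -> (m <= jeps lam e)%N].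
Proof.
move=> e0 e1.
have e20 : 0 < e ^+ 2 by rewrite exprn_gt0.
have [N _ HN] : \forall n \near \oo, `|lam n| < e ^+ 2.
  by move/cvgr0Pnorm_lt : lam_cvg0; apply.
pose P := fun m : nat => (1 <= m)%N && (e ^+ 2 < lam m).
have exP : exists i, P i.
  by exists 1%N; rewrite /P lam1 /= expr2; nra.
have ubP : forall i, P i -> (i <= N)%N.
  move=> i /andP[i1 Hi]; rewrite leqNgt; apply/negP => Ni.
  have := HN i (ltnW Ni); rewrite ger0_norm ?lam_ge0 // => H.
  by move: Hi; rewrite ltNge (ltW H).
case: (ex_maxnP exP ubP) => i /andP[i1 Hi] imax.
rewrite /jeps; set x := xget _ _.
have : [set n : nat | (1 <= n)%N /\ e ^+ 2 < lam n /\
         (forall m : nat, (1 <= m)%N -> e ^+ 2 < lam m -> (m <= n)%N)] x.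
  apply: xgetPex; exists i; split => //; split => // m m1 Hm.
  by apply: imax; rewrite /P m1 Hm.
by move=> [x1 [xl xm]]; split.
Qed.

Definition Q := forall d : R, 0 < d ->
  \forall e \near (0:R)^'+, ln (ln ((jeps lam e)%:R)) <= d * ln (ln e^-1).


Lemma a_Q : (fun eps : R => ln (ln ((jeps lam eps)%:R)) / ln (ln eps^-1))
           @ 0^'+ --> 0 -> Q.
Proof.
move=> /cvgr0Pnorm_lt Ha d d0.
near=> e.
have [e0 e1 L1 LL] : [/\ 0 < e, e < 1, 1 < ln e^-1 & 0 < ln (ln e^-1)].
  by near: e; exact: Eps.
have H : `|ln (ln ((jeps lam e)%:R)) / ln (ln e^-1)| < d by near: e; exact: Ha.
move: H => /(le_lt_trans (ler_norm _)); rewrite ltr_pdivrMr // => H.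
exact: ltW.
Unshelve. all: by end_near.
Qed.

Lemma Q_a : Q -> (fun eps : R => ln (ln ((jeps lam eps)%:R)) / ln (ln eps^-1))
           @ 0^'+ --> 0.
Proof.
move=> HQ; apply/cvgr0Pnorm_lt => c c0.
set m0 := Num.min 0 (ln (ln (2:R))).
have m00 : m0 <= 0 by rewrite ge_min lexx.
have c20 : 0 < c / 2 by rewrite divr_gt0.
near=> e.
have [e0 e1 L1 LL] : [/\ 0 < e, e < 1, 1 < ln e^-1 & - m0 / c < ln (ln e^-1)].
  by near: e; exact: Eps.
have Hq : ln (ln ((jeps lam e)%:R)) <= c / 2 * ln (ln e^-1).
  by near: e; exact: HQ.
have Hl := lnln_lb (jeps lam e).
rewrite -/m0 in Hl.
have lL0 : 0 < ln (ln e^-1).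
  apply: le_lt_trans LL; rewrite divr_ge0 ?oppr_ge0 // ltW //.
rewrite ltr_pdivrMr // in LL.
rewrite normrM normfV (gtr0_norm lL0) ltr_pdivrMr // ltr_norml; apply/andP; split.
  lra.
nra.
Unshelve. all: by end_near.
Qed.

Lemma c_Q : (forall delta : R, 0 < delta ->
         (fun eps : R => ln ((jeps lam eps)%:R) / (ln eps^-1) `^ delta)
           @ 0^'+ --> 0) -> Q.
Proof.
move=> Hc d d0; have /cvgr0Pnorm_lt Hd := Hc d d0.
near=> e.
have [e0 e1 L1 LL] : [/\ 0 < e, e < 1, 1 < ln e^-1 & 0 < ln (ln e^-1)].
  by near: e; exact: Eps.
have H : `|ln ((jeps lam e)%:R) / (ln e^-1) `^ d| < 1 by near: e; exact: Hd.
have Lp : 0 < ln e^-1 by apply: lt_trans L1.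
have P0 : 0 < (ln e^-1) `^ d := powR_gt0 _ Lp.
move: H => /(le_lt_trans (ler_norm _)); rewrite ltr_pdivrMr // mul1r => H.
have [lj|lj] := leP (ln ((jeps lam e)%:R : R)) 0.
  by rewrite (ln0 lj) mulr_ge0 // ltW.
rewrite -ln_powR; apply/ltW; rewrite ltr_ln ?posrE //.
Unshelve. all: by end_near.
Qed.

Lemma Q_c : Q -> forall delta : R, 0 < delta ->
         (fun eps : R => ln ((jeps lam eps)%:R) / (ln eps^-1) `^ delta)
           @ 0^'+ --> 0.
Proof.
move=> HQ d d0; apply/cvgr0Pnorm_lt => c c0.
have d20 : 0 < d / 2 by rewrite divr_gt0.
near=> e.
have [e0 e1 L1 LL] : [/\ 0 < e, e < 1, 1 < ln e^-1 & - (2 * ln c) / d < ln (ln e^-1)].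
  by near: e; exact: Eps.
have Hq : ln (ln ((jeps lam e)%:R)) <= d / 2 * ln (ln e^-1).
  by near: e; exact: HQ.
have [j1 _ _] := jepsP _ e0 e1.
have Lp : 0 < ln e^-1 by apply: lt_trans L1.
have P0 : 0 < (ln e^-1) `^ d := powR_gt0 _ Lp.
have lj0 : 0 <= ln ((jeps lam e)%:R : R) by apply: ln_ge0; rewrite ler1n.
rewrite ger0_norm; last by rewrite divr_ge0 // ltW.
have [lj|lj] := leP (ln ((jeps lam e)%:R : R)) 0.
  have -> : ln ((jeps lam e)%:R : R) = 0 by apply/le_anti/andP.
  by rewrite mul0r.
have -> : ln ((jeps lam e)%:R : R) = expR (ln (ln ((jeps lam e)%:R : R))).
  by rewrite lnK // posrE.
have -> : (ln e^-1) `^ d = expR (d * ln (ln e^-1)) by rewrite /powR gt_eqF.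
have -> : c = expR (ln c) by rewrite lnK // posrE.
rewrite -expRN -expRD ltr_expR.
rewrite ltr_pdivrMr // in LL.
lra.
Unshelve. all: by end_near.
Qed.


Lemma Q_b : Q -> ratio_b lam @ \oo --> +oo%E.
Proof.
move=> HQ; apply/cvgeyPge => A.
set A' := Num.max A 1.
have A'1 : 1 <= A' by rewrite le_max lexx orbT.
have A'A : A <= A' by rewrite le_max lexx.
have A'0 : 0 < A' by apply: lt_le_trans A'1.
have Ai : 0 < A'^-1 by rewrite invr_gt0.
have [e0' e0'0 He] := ex_right _ (HQ _ Ai).
set e0 := Num.min e0' 1.
have e00 : 0 < e0 by rewrite lt_min e0'0 ltr01.
have Hl : \forall j \near \oo, `|lam j| < e0.
  by move/cvgr0Pnorm_lt : lam_cvg0; apply.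
near=> j.
have jN : (N0 <= j)%N by near: j; exists N0 => // n /=.
have j1 : (1 <= j)%N by apply: leq_trans jN.
have lj : `|lam j| < e0 by near: j; exact: Hl.
rewrite /ratio_b; have [_|lj0] := eqVneq (lam j) 0; first by rewrite leey.
have ljp : 0 < lam j by rewrite lt_neqAle eq_sym lj0 lam_ge0.
rewrite ger0_norm ?(ltW ljp) // lt_min in lj.
case/andP: lj => lje lj1.
have [jj1 jjl jjm] := jepsP _ ljp lj1.
have jle : (j <= jeps lam (lam j))%N.
  by apply: jjm => //; rewrite expr2; nra.
have H := He _ ljp lje.
have Hm := lnln_mono _ _ jle (ltW (N0P _ (leq_trans jN jle))).
have P := N0P _ jN.
rewrite lee_fin (le_trans A'A) // ler_pdivlMr //.
have AA : A' * A'^-1 = 1 by rewrite divff // gt_eqF.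
nra.
Unshelve. all: by end_near.
Qed.

Lemma b_Q : ratio_b lam @ \oo --> +oo%E -> Q.
Proof.
move=> /cvgeyPge Hb d d0.
have [J _ HJ] := Hb (2 / d).
set J' := maxn J N0.
set K' := ln (ln (J'%:R : R)).
have K'0 : 0 < K' by apply: N0P; rewrite leq_maxr.
have l2 : 0 < ln (2 : R) by apply: ln_gt0; rewrite ltr1n.
near=> e.
have [e0 e1 L1 LK] : [/\ 0 < e, e < 1, 1 < ln e^-1 & K' / d < ln (ln e^-1)].
  by near: e; exact: Eps.
have [_ _ _ L2] : [/\ 0 < e, e < 1, 1 < ln e^-1 & ln 2 < ln (ln e^-1)].
  by near: e; exact: Eps.
have [n1 nl nm] := jepsP _ e0 e1.
have lnp : 0 < lam (jeps lam e) by apply: lt_trans nl; rewrite exprn_gt0.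
have Lp : 0 < ln e^-1 by apply: lt_trans L1.
rewrite ltr_pdivrMr // in LK.
case: (leqP J' (jeps lam e)) => [Jn|nJ]; last first.
  have := lnln_mono _ _ (ltnW nJ) (ltW K'0); rewrite -/K'.
  lra.
have := HJ (jeps lam e) (leq_trans (leq_maxl J N0) Jn).
rewrite /ratio_b (gt_eqF lnp) lee_fin.
have P := N0P _ (leq_trans (leq_maxr J N0) Jn).
rewrite ler_pdivlMr // mulrAC ler_pdivrMr // => H.
set mu := ln (lam (jeps lam e))^-1.
have mu2L : mu < 2 * ln e^-1.
  rewrite /mu -[2]/(2%:R) mulr_natl -lnXn ?invr_gt0 //.
  rewrite ltr_ln ?posrE ?invr_gt0 ?exprn_gt0 ?invr_gt0 // exprVn.
  by rewrite ltf_pV2 ?posrE ?exprn_gt0.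
have mup : 0 < mu.
  rewrite ltNge; apply/negP => mu0.
  move: H; rewrite (ln0 mu0) mul0r => H.
  have := mulr_gt0 (ltr0n R 2) P; lra.
have : ln mu < ln (2 * ln e^-1) by rewrite ltr_ln ?posrE ?mulr_gt0.
rewrite lnM ?posrE // => Hmu.
nra.
Unshelve. all: by end_near.
Qed.

End Aux.

Theorem lemma2 (R : realType) (lam : nat -> R)
  (lam1 : lam 1%N = 1)
  (lam_ge0 : forall j : nat, (1 <= j)%N -> 0 <= lam j)
  (lam_noninc : forall i j : nat, (1 <= i)%N -> (i <= j)%N -> lam j <= lam i)
  (lam_cvg0 : lam @ \oo --> 0) :
  [<-> (fun eps : R => ln (ln ((jeps lam eps)%:R)) / ln (ln eps^-1))
           @ 0^'+ --> 0 ;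
       ratio_b lam @ \oo --> +oo%E ;
       forall delta : R, 0 < delta ->
         (fun eps : R => ln ((jeps lam eps)%:R) / (ln eps^-1) `^ delta)
           @ 0^'+ --> 0].
Proof.
constructor; [|constructor].
- move=> Ha; exact: (Q_b _ _ lam1 lam_ge0 lam_cvg0 (a_Q _ _ Ha)).
- move=> Hb; exact: (Q_c _ _ lam1 lam_ge0 lam_cvg0 (b_Q _ _ lam1 lam_ge0 lam_cvg0 Hb)).
- move=> Hc; exact: (Q_a _ _ (c_Q _ _ Hc)).
Qed.
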